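(* Assume $\mathcal{W}^\ast=\sum_{k=1}^K\mathcal{W}^{\ast(k)}$ with $\|\boldsymbol{W}^{\ast(l)}_{(k)}\|_{S_\infty}\le\alpha$ for all $k\ne l$, and let $(\hat{\mathcal{W}}^{(k)})_k$ be a solution of $$\min_{\mathcal{W}^{(1)},\dots,\mathcal{W}^{(K)}}\ \tfrac12\Bigl\|\mathcal{Y}-\sum_{k}\mathcal{W}^{(k)}\Bigr\|_F^2+\lambda\sum_{k}\|\boldsymbol{W}^{(k)}_{(k)}\|_{S_1}\quad\text{s.t. } \|\boldsymbol{W}^{(k)}_{(l)}\|_{S_\infty}\le\alpha\ \ \forall\, l\ne k$$ (for some tensor $\mathcal{Y}$ and $\lambda>0$). Let $\Delta^{(k)}=\hat{\mathcal{W}}^{(k)}-\mathcal{W}^{\ast(k)}$ and $\Delta=\sum_{k=1}^K\Delta^{(k)}$. Then $$\frac12\sum_{k=1}^K\|\Delta^{(k)}\|_F^2\le\frac12\|\Delta\|_F^2+\alpha(K-1)\sum_{k=1}^K\|\boldsymbol{\Delta}^{(k)}_{(k)}\|_{S_1}.$$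
   Context: Tensors are elements of $\mathbb{R}^{n_1\times\cdots\times n_K}$ with $N=\prod_k n_k$; $\|\cdot\|_F$ is the Euclidean norm of the vectorization. For a tensor $\mathcal{W}^{(l)}$ (resp. $\Delta^{(k)}$), $\boldsymbol{W}^{(l)}_{(k)}$ (resp. $\boldsymbol{\Delta}^{(k)}_{(k)}$) in $\mathbb{R}^{n_k\times N/n_k}$ is its mode-$k$ unfolding (columns are mode-$k$ fibers). $\|\cdot\|_{S_1}$ is the trace norm and $\|\cdot\|_{S_\infty}$ the spectral norm; $\alpha\ge0$. *)

(* Defs.v *)
From HB Require Import structures.
From mathcomp Require Import all_boot all_order all_algebra.
From Stdlib Require Import ClassicalEpsilon.
Set Implicit Arguments. Unset Strict Implicit. Unset Printing Implicit Defensive.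
Import Order.TTheory GRing.Theory Num.Theory.
Local Open Scope ring_scope.

Definition fmat (R : rcfType) (rows cols : finType) := rows -> cols -> R.

(* Compact SVD data: r positive singular values sigma, orthonormal left
   singular vectors u and right singular vectors v. *)
Definition svd_data (R : rcfType) (rows cols : finType) :=
  {r : nat & (('I_r -> R) * ('I_r -> rows -> R) * ('I_r -> cols -> R))%type}.

Definition is_svd (R : rcfType) (rows cols : finType) (A : fmat R rows cols)
    (d : svd_data R rows cols) : Prop :=
  let: existT r (sigma, u, v) := d in
  [/\ forall a, 0 < sigma a,
      forall a b, \sum_(x : rows) u a x * u b x = (a == b)%:R,
      forall a b, \sum_(y : cols) v a y * v b y = (a == b)%:R &
      forall x y, A x y = \sum_(a < r) sigma a * u a x * v a y].

Definition svd_inhabited (R : rcfType) (rows cols : finType) :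
  inhabited (svd_data R rows cols) :=
  inhabits (existT _ 0%N ((fun _ => 0), (fun _ _ => 0), (fun _ _ => 0))).

Definition svd_of (R : rcfType) (rows cols : finType) (A : fmat R rows cols) :=
  epsilon (@svd_inhabited R rows cols) (is_svd A).

Definition sing_vals (R : rcfType) (rows cols : finType) (A : fmat R rows cols) :
  {r : nat & 'I_r -> R} :=
  let: existT r (sigma, _, _) := svd_of A in existT _ r sigma.

Definition trace_norm (R : rcfType) (rows cols : finType) (A : fmat R rows cols) : R :=
  let: existT r sigma := sing_vals A in \sum_(a < r) sigma a.

Definition spec_norm (R : rcfType) (rows cols : finType) (A : fmat R rows cols) : R :=
  let: existT r sigma := sing_vals A in \big[Num.max/0]_(a < r) sigma a.

Definition tidx (K : nat) (n : 'I_K -> nat) := {dffun forall j : 'I_K, 'I_(n j)}.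
Definition tensor (R : rcfType) (K : nat) (n : 'I_K -> nat) := tidx n -> R.

Definition frob2 (R : rcfType) K (n : 'I_K -> nat) (T : tensor R n) : R :=
  \sum_(x : tidx n) T x ^+ 2.

Definition tadd (R : rcfType) K (n : 'I_K -> nat) (S T : tensor R n) : tensor R n :=
  fun x => S x + T x.
Definition tsub (R : rcfType) K (n : 'I_K -> nat) (S T : tensor R n) : tensor R n :=
  fun x => S x - T x.
Definition tsum (R : rcfType) K (n : 'I_K -> nat) (W : 'I_K -> tensor R n) : tensor R n :=
  fun x => \sum_(k < K) W k x.

(* column index of the mode-k unfolding: the indices of all other modes *)
Definition colidx (K : nat) (n : 'I_K -> nat) (k : 'I_K) :=
  {dffun forall j : {j : 'I_K | j != k}, 'I_(n (val j))}.

(* full index from a mode-k index i and the other indices c *)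
Definition merge (K : nat) (n : 'I_K -> nat) (k : 'I_K) (i : 'I_(n k))
    (c : colidx n k) : tidx n :=
  @finfun _ (fun j => 'I_(n j)) (fun j : 'I_K =>
    (if j == k as b return (j == k) = b -> 'I_(n j)
     then fun e => cast_ord (congr1 n (esym (eqP e))) i
     else fun e => c (exist _ j (negbT e))) (erefl _)).

(* mode-k unfolding W_(k) : an n_k x (N / n_k) matrix whose columns are the
   mode-k fibers (column order is irrelevant for the norms used) *)
Definition unfold (R : rcfType) K (n : 'I_K -> nat) (k : 'I_K) (T : tensor R n) :
  fmat R 'I_(n k) (colidx n k) := fun i c => T (merge i c).
Arguments unfold {R K n} k T.

Definition objective (R : rcfType) K (n : 'I_K -> nat) (Y : tensor R n) (lam : R)
    (W : 'I_K -> tensor R n) : R :=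
  2^-1 * frob2 (tsub Y (tsum W)) + lam * \sum_(k < K) trace_norm (unfold k (W k)).

Definition feasible (R : rcfType) K (n : 'I_K -> nat) (alpha : R)
    (W : 'I_K -> tensor R n) : Prop :=
  forall k l : 'I_K, l != k -> spec_norm (unfold l (W k)) <= alpha.

(* Main.v *)
Require Import Defs.
From HB Require Import structures.
From mathcomp Require Import all_boot all_order all_algebra.
From mathcomp Require Import complex.
From mathcomp Require Import ring lra.
From Stdlib Require Import ClassicalEpsilon.
Set Implicit Arguments. Unset Strict Implicit. Unset Printing Implicit Defensive.
Import Order.TTheory GRing.Theory Num.Theory.
Local Open Scope ring_scope.

Lemma sym_eig (R : rcfType) n (S : 'M[R]_n) : S^T = S -> S != 0 ->
  exists2 lam : R, lam != 0 & \det (S - lam%:M) = 0.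
Proof.
move=> St Sn0.
pose f := real_complex R.
pose Sc : 'M[R[i]]_n := map_mx f S.
have Sreal : Sc \is a realmx.
  by apply/mxOverP => i j; rewrite mxE; apply/complex_realP; exists (S i j).
have Ssym : Sc \is symmetricmx.
  by apply/is_hermitianmxP; rewrite expr0 scale1r map_mx_id //; apply/matrixP => a b; rewrite !mxE -[in RHS]St mxE.
have Sh := realsym_hermsym Ssym Sreal.
have /orthomx_spectralP Seq := hermitian_normalmx Sh.
have dreal := hermitian_spectral_diag_real Sh.
set P := spectralmx Sc in Seq.
set d := spectral_diag Sc in Seq dreal.
have [i di0] : exists i, d 0 i != 0.
  apply/existsP; apply: contraNT Sn0; rewrite negb_exists => /forallP d0.
  have : Sc = 0.
    rewrite Seq; have -> : diag_mx d = 0.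
      apply/matrixP => a b; rewrite !mxE; case: eqP => [->|_]; rewrite ?mulr0n //.
      by move: (d0 b); rewrite negbK => /eqP ->; rewrite mul0rn.
    by rewrite mulmx0 mul0mx.
  move/matrixP => H; apply/eqP/matrixP => a b; move: (H a b).
  by rewrite !mxE => /eqP; rewrite -(rmorph0 f) (inj_eq (@complexI R)) => /eqP.
have dr : d 0 i \is Num.real by move/mxOverP: dreal; apply.
exists (complex.Re (d 0 i)).
  apply: contra di0 => /eqP h; rewrite -(RRe_real dr) h; apply/eqP; exact: (rmorph0 f).
apply: (@complexI R); rewrite (rmorph0 f) -det_map_mx map_mxB /= map_scalar_mx /= (RRe_real dr) -/Sc Seq.
have PU := spectral_unit Sc.
have -> : (d 0 i)%:M = invmx P *m (d 0 i)%:M *m P.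
  by rewrite scalar_mxC -mulmxA mulVmx // mulmx1.
rewrite -mulmxBl -mulmxBr !det_mulmx det_inv.
have -> : diag_mx d - (d 0 i)%:M = diag_mx (d - const_mx (d 0 i)).
  by apply/matrixP => a b; rewrite !mxE mulrnBl.
rewrite det_diag (bigD1 i) //= !mxE subrr mul0r mulr0; exact: mul0r.
Qed.

Section SVD.
Variable R : rcfType.

Lemma sqn_ge0 k (x : 'rV[R]_k) : 0 <= (x *m x^T) 0 0.
Proof.
rewrite mxE; apply: sumr_ge0 => j _; rewrite mxE -expr2; exact: sqr_ge0.
Qed.

Lemma sqn_eq0 k (x : 'rV[R]_k) : ((x *m x^T) 0 0 == 0) = (x == 0).
Proof.
apply/idP/idP => [|/eqP ->]; last by rewrite mul0mx mxE.
rewrite mxE => /eqP H; apply/eqP/matrixP => i j; rewrite mxE ord1.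
have h : forall a : 'I_k, true -> 0 <= x 0 a * x^T a 0.
  by move=> a _; rewrite mxE -expr2 sqr_ge0.
by move: (psumr_eq0P h H (i:=j) isT); rewrite mxE -expr2 => /eqP; rewrite sqrf_eq0 => /eqP.
Qed.

Lemma tr_AtA_eq0 m n (A : 'M[R]_(m, n)) : A^T *m A = 0 -> A = 0.
Proof.
move=> H; apply/matrixP => i j; rewrite [RHS]mxE.
have := congr1 (fun M : 'M[R]_n => M j j) H; rewrite !mxE => H2.
have h : forall a : 'I_m, true -> 0 <= A^T j a * A a j.
  by move=> a _; rewrite mxE -expr2 sqr_ge0.
by move: (psumr_eq0P h H2 (i:=i) isT); rewrite mxE -expr2 => /eqP; rewrite sqrf_eq0 => /eqP.
Qed.

Lemma svd_mx m n (A : 'M[R]_(m, n)) : exists r (s : 'rV[R]_r) (U : 'M[R]_(r, m)) (V : 'M[R]_(r, n)),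
  [/\ forall a, 0 < s 0 a, U *m U^T = 1%:M, V *m V^T = 1%:M & A = U^T *m diag_mx s *m V].
Proof.
have [k] := ubnP (\rank A); elim: k A => // k IH A rkA.
have [->|An0] := eqVneq A 0.
  exists 0%N, 0, 0, 0; split => //; first by move=> [].
  - by rewrite [LHS]flatmx0 [RHS]flatmx0.
  - by rewrite [LHS]flatmx0 [RHS]flatmx0.
  - by rewrite mulmx0.
pose S := A^T *m A.
have St : S^T = S by rewrite /S trmx_mul trmxK.
have Sn0 : S != 0 by apply: contra An0 => /eqP /tr_AtA_eq0 ->.
have [lam lam0 dS] := sym_eig St Sn0.
have /det0P [w w0 wS] : \det (S - lam%:M) == 0 by rewrite dS.
have wS' : w *m S = lam *: w.
  by move/eqP: wS; rewrite mulmxBr mul_mx_scalar subr_eq0 => /eqP.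
set nw := (w *m w^T) 0 0.
have nw0 : 0 < nw by rewrite lt0r sqn_eq0 w0 sqn_ge0.
pose v := (Num.sqrt nw)^-1 *: w.
have vv : v *m v^T = 1%:M.
  rewrite [LHS]mx11_scalar; congr (_%:M).
  rewrite /v linearZ /= -scalemxAl -scalemxAr mxE [X in _ * X]mxE -/nw mulrA -expr2 exprVn sqr_sqrtr ?ltW //.
  by rewrite mulVf // gt_eqF.
have vS : v *m S = lam *: v by rewrite /v -scalemxAl wS' scalerA mulrC -scalerA.
clearbody v.
pose x := v *m A^T.
have xx : x *m x^T = lam%:M.
  by rewrite /x trmx_mul trmxK mulmxA -(mulmxA v) -/S vS -scalemxAl vv scalemx1.
have lam_pos : 0 < lam.
  move: (sqn_ge0 x); rewrite xx mxE eqxx mulr1n => h.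
  by rewrite lt0r lam0.
pose sg := Num.sqrt lam.
have sg0 : 0 < sg by rewrite sqrtr_gt0.
have sg2 : sg ^+ 2 = lam by rewrite sqr_sqrtr ?ltW.
pose u := sg^-1 *: x.
have uA : u *m A = sg *: v.
  rewrite /u /x -scalemxAl -mulmxA -/S vS scalerA -sg2.
  by rewrite expr2 mulrA mulVf ?gt_eqF // mul1r.
have uu : u *m u^T = 1%:M.
  rewrite /u linearZ /= -scalemxAl -scalemxAr xx scalerA scale_scalar_mx -sg2 expr2.
  by rewrite mulrACA mulVf ?gt_eqF // mulr1.

have Av : A *m v^T = sg *: u^T.
  by rewrite /u linearZ /= scalerA divff ?gt_eqF // scale1r /x trmx_mul trmxK.
pose A' := A - sg *: (u^T *m v).
have A'v : A' *m v^T = 0.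
  by rewrite /A' mulmxBl Av -scalemxAl -mulmxA vv mulmx1 subrr.
have uA' : u *m A' = 0.
  by rewrite /A' mulmxBr uA -scalemxAr mulmxA uu mul1mx subrr.
have A'E : A' = (1%:M - u^T *m u) *m A.
  by rewrite mulmxBl mul1mx -mulmxA uA -scalemxAr.
have rk : (\rank A' < \rank A)%N.
  apply: rank_ltmx; rewrite ltmxE A'E submxMl /=.
  apply/negP => sAA'.
  have : (sg *: v <= A')%MS by rewrite -uA; rewrite -A'E in sAA'; exact: submx_trans (submxMl u A) sAA'.
  case/submxP => D hD.
  have := congr1 (fun M => M *m v^T) hD; rewrite -mulmxA A'v mulmx0 -scalemxAl vv.
  move=> /matrixP/(_ 0 0); rewrite !mxE eqxx mulr1 => /eqP; rewrite (gt_eqF sg0).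
  done.
have [r' [s' [U' [V' [s'0 UU VV A'E2]]]]] := IH A' (leq_trans rk rkA).
have V'v : V' *m v^T = 0.
  have e : diag_mx s' *m V' = U' *m A' by rewrite A'E2 !mulmxA UU mul1mx.
  have : diag_mx s' *m V' *m v^T = 0 by rewrite e -mulmxA A'v mulmx0.
  rewrite -mulmxA mul_diag_mx => /matrixP H; apply/matrixP => a b; have := H a b.
  rewrite mxE [RHS]mxE => /eqP; rewrite mulf_eq0 (gt_eqF (s'0 a)) /= => /eqP.
  by move=> ->; rewrite mxE.
have uU' : u *m U'^T = 0.
  have e : U'^T *m diag_mx s' = A' *m V'^T by rewrite A'E2 -!mulmxA VV mulmx1.
  have : u *m U'^T *m diag_mx s' = 0 by rewrite -mulmxA e mulmxA uA' mul0mx.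
  rewrite mul_mx_diag => /matrixP H; apply/matrixP => a b; have := H a b.
  rewrite mxE [RHS]mxE => /eqP; rewrite mulf_eq0 (gt_eqF (s'0 b)) orbF => /eqP.
  by move=> ->; rewrite mxE.
have U'u : U' *m u^T = 0 by rewrite -[LHS]trmxK trmx_mul !trmxK uU' trmx0.
have V'v' : v *m V'^T = 0 by rewrite -[LHS]trmxK trmx_mul !trmxK V'v trmx0.
exists (1 + r')%N, (row_mx (const_mx sg) s'), (col_mx u U'), (col_mx v V'); split.
- by move=> a; rewrite -[a]splitK; case: (split a) => j /=; rewrite ?row_mxEl ?row_mxEr ?mxE.
- by rewrite tr_col_mx mul_col_row uu uU' U'u UU [RHS](scalar_mx_block 1 r').
- by rewrite tr_col_mx mul_col_row vv V'v' V'v VV [RHS](scalar_mx_block 1 r').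
rewrite tr_col_mx diag_mx_row mul_row_block !mulmx0 addr0 add0r mul_row_col.
by rewrite -A'E2 diag_const_mx mul_mx_scalar -scalemxAl /A' addrC subrK.
Qed.

End SVD.

Section Fmat.
Variable R : rcfType.

Lemma sum_rank (T : finType) (F : 'I_#|T| -> R) :
  \sum_(i < #|T|) F i = \sum_(x : T) F (enum_rank x).
Proof.
rewrite (reindex (@enum_rank T)) //; exists enum_val => x _; [exact: enum_rankK | exact: enum_valK].
Qed.

Lemma svd_exists (rows cols : finType) (A : fmat R rows cols) : exists d, is_svd A d.
Proof.
pose M := \matrix_(i < #|rows|, j < #|cols|) A (enum_val i) (enum_val j).
have [r [s [U [V [s0 UU VV ME]]]]] := svd_mx M.
exists (existT _ r ((fun a => s 0 a), (fun a x => U a (enum_rank x)), (fun a y => V a (enum_rank y)))).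
split => //.
- move=> a b; rewrite -(sum_rank (fun i => U a i * U b i)).
  by have := congr1 (fun X : 'M[R]_r => X a b) UU; rewrite !mxE => <-; apply: eq_bigr => i _; rewrite mxE.
- move=> a b; rewrite -(sum_rank (fun i => V a i * V b i)).
  by have := congr1 (fun X : 'M[R]_r => X a b) VV; rewrite !mxE => <-; apply: eq_bigr => i _; rewrite mxE.
move=> x y; have := congr1 (fun X : 'M[R]_(_, _) => X (enum_rank x) (enum_rank y)) ME.
rewrite mxE !enum_rankK => ->; rewrite mul_mx_diag mxE; apply: eq_bigr => a _.
by rewrite !mxE [_ * s 0 a]mulrC.
Qed.

Lemma svd_of_spec (rows cols : finType) (A : fmat R rows cols) : is_svd A (svd_of A).
Proof. by rewrite /svd_of; apply: epsilon_spec; exact: svd_exists. Qed.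


Lemma bessel (T : finType) r (p : 'I_r -> T -> R) (u : T -> R) :
  (forall a b, \sum_x p a x * p b x = (a == b)%:R) ->
  \sum_b (\sum_x u x * p b x) ^+ 2 <= \sum_x u x ^+ 2.
Proof.
move=> po.
pose al b := \sum_x u x * p b x.
pose s x := \sum_b al b * p b x.
have h1 : \sum_x u x * s x = \sum_b al b ^+ 2.
  rewrite /s (eq_bigr (fun x => \sum_b al b * (u x * p b x))); last first.
    by move=> x _; rewrite mulr_sumr; apply: eq_bigr => b _; rewrite mulrCA.
  by rewrite exchange_big /=; apply: eq_bigr => b _; rewrite -mulr_sumr expr2.
have h2 : \sum_x s x ^+ 2 = \sum_b al b ^+ 2.
  rewrite (eq_bigr (fun x => \sum_b \sum_c al b * al c * (p b x * p c x))); last first.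
    move=> x _; rewrite expr2 /s mulr_suml; apply: eq_bigr => b _; rewrite mulr_sumr.
    by apply: eq_bigr => c _; ring.
  rewrite exchange_big /=; apply: eq_bigr => b _.
  rewrite exchange_big /= (bigD1 b) //= -mulr_sumr po eqxx mulr1 big1 ?addr0 ?expr2 //.
  by move=> c /negPf cb; rewrite -mulr_sumr po eq_sym cb mulr0.
have : 0 <= \sum_x (u x - s x) ^+ 2 by apply: sumr_ge0 => x _; exact: sqr_ge0.
rewrite (eq_bigr (fun x => u x ^+ 2 - (u x * s x) *+ 2 + s x ^+ 2)); last first.
  by move=> x _; rewrite sqrrB.
rewrite big_split /= sumrB sumrMnl h1 h2 mulr2n.
move=> h; rewrite -subr_ge0; lra.
Qed.

Lemma bil_bound (T1 T2 : finType) (B : fmat R T1 T2) r tau p q (M : R)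
    (u : T1 -> R) (v : T2 -> R) :
  is_svd B (existT _ r (tau, p, q)) -> (forall b, tau b <= M) -> 0 <= M ->
  \sum_x u x ^+ 2 <= 1 -> \sum_y v y ^+ 2 <= 1 ->
  `| \sum_x \sum_y u x * B x y * v y | <= M.
Proof.
case=> tau0 po qo BE hM M0 hu hv.
pose al b := \sum_x u x * p b x.
pose be b := \sum_y v y * q b y.
have E : \sum_x \sum_y u x * B x y * v y = \sum_b tau b * al b * be b.
  rewrite (eq_bigr (fun x => \sum_b \sum_y tau b * (u x * p b x) * (v y * q b y))); last first.
    move=> x _; rewrite (eq_bigr (fun y => \sum_b tau b * (u x * p b x) * (v y * q b y))); last first.
      move=> y _; rewrite BE mulr_sumr mulr_suml; apply: eq_bigr => b _; ring.
    by rewrite exchange_big.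
  rewrite exchange_big /=; apply: eq_bigr => b _.
  rewrite /al mulr_sumr mulr_suml; apply: eq_bigr => x _; rewrite /be mulr_sumr.
  by apply: eq_bigr => y _; ring.
rewrite E; apply: le_trans (ler_norm_sum _ _ _) _.
apply: (@le_trans _ _ (\sum_b M * ((al b ^+ 2 + be b ^+ 2) / 2))).
  apply: ler_sum => b _; rewrite !normrM (ger0_norm (ltW (tau0 b))).
  have h : `|al b| * `|be b| <= (al b ^+ 2 + be b ^+ 2) / 2.
    rewrite -[al b ^+ 2]real_normK ?num_real // -[be b ^+ 2]real_normK ?num_real //.
    have := sqr_ge0 (`|al b| - `|be b|); lra.
  have t0 := tau0 b; have tM := hM b.
  have a0 := normr_ge0 (al b); have c0 := normr_ge0 (be b).
  nra.
have ha := bessel u po; have hb := bessel v qo.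
rewrite -mulr_sumr -mulr_suml big_split /=.
rewrite -/al -/be in ha hb.
nra.
Qed.

End Fmat.

Lemma dep_if_ind (P : bool) (T : Type) (f : P = true -> T) (g : P = false -> T)
  (Q : T -> Prop) : (forall e, Q (f e)) -> (forall e, Q (g e)) ->
  Q ((if P as b return P = b -> T then f else g) (erefl P)).
Proof. by move: f g; case: P => f g /=. Qed.

Section Merge.
Variables (K : nat) (n : 'I_K -> nat) (k : 'I_K).

Lemma merge_k (i : 'I_(n k)) (c : colidx n k) : Defs.merge i c k = i.
Proof.
rewrite /Defs.merge ffunE; apply: (@dep_if_ind _ _ _ _ (fun t => t = i)).
  by move=> e; apply: val_inj.
by move=> e; exfalso; have := negbT e; rewrite eqxx.
Qed.

Lemma merge_nk (i : 'I_(n k)) (c : colidx n k) (j : {j : 'I_K | j != k}) :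
  Defs.merge i c (val j) = c j.
Proof.
rewrite /Defs.merge ffunE; apply: (@dep_if_ind _ _ _ _ (fun t => t = c j)).
  by move=> e; exfalso; have := valP j; rewrite e.
by case: j => j0 p /= e; rewrite (bool_irrelevance (negbT e) p).
Qed.

Definition rest (x : tidx n) : colidx n k := [ffun j => x (val j)].

Lemma merge_rest (x : tidx n) : Defs.merge (x k) (rest x) = x.
Proof.
apply/ffunP => j; rewrite /Defs.merge ffunE; apply: (@dep_if_ind _ _ _ _ (fun t => t = x j)).
  by move=> e; apply: val_inj => /=; rewrite (eqP e).
by move=> e; rewrite /rest ffunE.
Qed.

Lemma sum_merge (R : nmodType) (F : tidx n -> R) :
  \sum_x F x = \sum_(i : 'I_(n k)) \sum_(c : colidx n k) F (Defs.merge i c).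
Proof.
rewrite pair_big /= (reindex (fun p : 'I_(n k) * colidx n k => Defs.merge p.1 p.2)) //.
exists (fun x : tidx n => (x k, rest x)) => [[i c] _ | x _] /=; last exact: merge_rest.
congr (_, _); first exact: merge_k.
by apply/ffunP => j; rewrite ffunE merge_nk.
Qed.

End Merge.

Lemma trace_ge0 (R : rcfType) (T1 T2 : finType) (A : fmat R T1 T2) : 0 <= trace_norm A.
Proof.
have := svd_of_spec A; rewrite /trace_norm /sing_vals.
case: (svd_of A) => r [[s u] v] [s0 _ _ _]; apply: sumr_ge0 => a _; exact: ltW.
Qed.

Lemma ip_bound (R : rcfType) (T1 T2 : finType) (A B : fmat R T1 T2) :
  `| \sum_x \sum_y A x y * B x y | <= trace_norm A * spec_norm B.
Proof.
have := svd_of_spec A; have := svd_of_spec B.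
rewrite /trace_norm /spec_norm /sing_vals.
case: (svd_of B) => r' [[tau p] q] HB.
case: (svd_of A) => r [[s u] v] [s0 uo vo AE].
set M := \big[Num.max/0]_(a < r') tau a.
have hM : forall b, tau b <= M by move=> b; rewrite /M (bigD1 b) //= le_max lexx.
have M0 : 0 <= M.
  rewrite /M; elim/big_ind: _ => //= [x y hx hy|b _]; first by rewrite le_max hx.
  by case: HB => t0 _ _ _; exact: ltW.
have E : \sum_x \sum_y A x y * B x y = \sum_a s a * \sum_x \sum_y u a x * B x y * v a y.
  rewrite (eq_bigr (fun x => \sum_a \sum_y s a * (u a x * B x y * v a y))); last first.
    move=> x _; rewrite (eq_bigr (fun y => \sum_a s a * (u a x * B x y * v a y))); last first.
      by move=> y _; rewrite AE mulr_suml; apply: eq_bigr => a _; ring.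
    by rewrite exchange_big.
  rewrite exchange_big /=; apply: eq_bigr => a _; rewrite mulr_sumr.
  by apply: eq_bigr => x _; rewrite mulr_sumr.
rewrite E; apply: le_trans (ler_norm_sum _ _ _) _.
rewrite mulr_suml; apply: ler_sum => a _; rewrite normrM (ger0_norm (ltW (s0 a))).
apply: ler_wpM2l; first exact: ltW.
apply: (bil_bound HB hM M0).
  by rewrite (eq_bigr (fun x => u a x * u a x)) => [|x _]; [rewrite uo eqxx | rewrite expr2].
by rewrite (eq_bigr (fun x => v a x * v a x)) => [|x _]; [rewrite vo eqxx | rewrite expr2].
Qed.

Theorem lemma4 (R : rcfType) (K : nat) (n : 'I_K -> nat) (alpha lam : R)
    (Y Wstar : tensor R n) (Wst What : 'I_K -> tensor R n) :
  0 <= alpha -> 0 < lam ->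
  Wstar = tsum Wst ->
  (forall k l : 'I_K, k != l -> spec_norm (unfold k (Wst l)) <= alpha) ->
  feasible alpha What ->
  (forall W, feasible alpha W -> objective Y lam What <= objective Y lam W) ->
  let Delta := fun k => tsub (What k) (Wst k) in
  2^-1 * \sum_(k < K) frob2 (Delta k)
    <= 2^-1 * frob2 (tsum Delta)
       + alpha * (K%:R - 1) * \sum_(k < K) trace_norm (unfold k (Delta k)).
Proof.
move=> a0 _ _ Hst Hfeas _.
suff main : forall D : 'I_K -> tensor R n, (forall l x, D l x = What l x - Wst l x) ->
  2^-1 * \sum_(k < K) frob2 (D k)
    <= 2^-1 * frob2 (tsum D)
       + alpha * (K%:R - 1) * \sum_(k < K) trace_norm (unfold k (D k)).
  exact: (main (fun k => tsub (What k) (Wst k))).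
move=> D hD.
pose ip k l := \sum_x D k x * D l x.
have frobE : frob2 (tsum D) = \sum_k frob2 (D k) + \sum_k \sum_(l | l != k) ip k l.
  rewrite /frob2 /tsum.
  rewrite (eq_bigr (fun x => \sum_k \sum_l D k x * D l x)); last first.
    by move=> x _; rewrite expr2 mulr_suml; apply: eq_bigr => k _; rewrite mulr_sumr.
  rewrite exchange_big /= -big_split /=; apply: eq_bigr => k _.
  rewrite exchange_big /= (bigD1 k) //=; congr (_ + _).
have pair : forall k l, k != l -> - ip k l <= 2 * alpha * trace_norm (unfold k (D k)).
  move=> k l kl.
  have eip : forall S : tensor R n,
      \sum_x D k x * S x = \sum_i \sum_c unfold k (D k) i c * unfold k S i c.
    by move=> S; rewrite (sum_merge k).
  have h1 := ip_bound (unfold k (D k)) (unfold k (What l)).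
  have h2 := ip_bound (unfold k (D k)) (unfold k (Wst l)).
  rewrite -eip in h1; rewrite -eip in h2.
  have s1 := Hfeas l k kl.
  have s2 := Hst k l kl.
  have t0 := trace_ge0 (unfold k (D k)).
  have m1 := ler_wpM2l t0 s1; have m2 := ler_wpM2l t0 s2.
  have ipE : ip k l = \sum_x D k x * What l x - \sum_x D k x * Wst l x.
    by rewrite /ip -sumrB; apply: eq_bigr => x _; rewrite (hD l x) mulrBr.
  rewrite ipE; move: h1 h2; rewrite !ler_norml => /andP[h1 h1'] /andP[h2 h2'].
  lra.
have Hsum : - \sum_k \sum_(l | l != k) ip k l
    <= 2 * (alpha * (K%:R - 1) * \sum_k trace_norm (unfold k (D k))).
  rewrite -sumrN mulr_sumr mulr_sumr; apply: ler_sum => k _.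
  rewrite -sumrN.
  apply: (@le_trans _ _ (\sum_(l | l != k) 2 * alpha * trace_norm (unfold k (D k)))).
    by apply: ler_sum => l lk; apply: pair; rewrite eq_sym.
  rewrite sumr_const cardC1 card_ord -[_ *+ K.-1]mulr_natr.
  have K0 : (0 < K)%N := leq_ltn_trans (leq0n k) (ltn_ord k).
  have -> : (K.-1)%:R = K%:R - 1 :> R by rewrite -{2}(prednK K0) -natr1 addrK.
  have -> : 2 * (alpha * (K%:R - 1) * trace_norm (unfold k (D k)))
      = 2 * alpha * trace_norm (unfold k (D k)) * (K%:R - 1) by ring.
  exact: lexx.
rewrite frobE.
move: Hsum; set X := \sum_k \sum_(l | l != k) ip k l.
set Z := alpha * _ * _; set A := \sum_k frob2 (D k).
move=> H; lra.
Qed.
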